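(* Let $G$ be a finite group, $S$ a subset of $G$, and $\sigma,\tau$ the inner automorphisms of $G$ induced by elements $\tilde\sigma,\tilde\tau\in G$ (i.e. $\sigma(x)=\tilde\sigma x\tilde\sigma^{-1}$, $\tau(x)=\tilde\tau x\tilde\tau^{-1}$). Suppose $G$ is a subgroup of a group $\mathcal G$ and there is $g\in\mathcal G$ with $g\tilde\sigma g^{-1}=\tilde\tau$, $gSg^{-1}=S$ and $gGg^{-1}=G$. Then $C(G,S)^\sigma\cong C(G,S)^\tau$ and $C_\Sigma(G,S)^\sigma\cong C_\Sigma(G,S)^\tau$. In particular, if $\tilde\sigma,\tilde\tau\in\mathfrak S_n$ lie in the same conjugacy class and $\sigma,\tau$ are the corresponding inner automorphisms of $\mathfrak S_n$, then for any subset $S$ of $\mathfrak S_n$ there is $g\in\mathfrak S_n$ such that, with $S'=\bigcup_{i}g^iSg^{-i}$, the graphs $C(\mathfrak S_n,S')^\sigma$ and $C(\mathfrak S_n,S')^\tau$ are isomorphic, and the graphs $C_\Sigma(\mathfrak S_n,S')^\sigma$ and $C_\Sigma(\mathfrak S_n,S')^\tau$ are isomorphic.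
   Context: For a group $G$, subset $S$ and automorphism $\sigma$, the twisted Cayley graph $C(G,S)^\sigma$ has vertex set $G$ and an edge from $x$ to $\sigma(xs)$ for each $s\in S$; the twisted Cayley sum graph $C_\Sigma(G,S)^\sigma$ has an edge from $x$ to $\sigma(x^{-1}s)$. *)

(* Defs.v *)
From mathcomp Require Import all_boot all_fingroup.
Set Implicit Arguments. Unset Strict Implicit. Unset Printing Implicit Defensive.
Local Open Scope group_scope.

(* Inner automorphism induced by [a]: x |-> a x a^-1 (NOT MathComp's x ^ a). *)
Definition inner {gT : groupType} (a x : gT) : gT := a * x * a^-1.

Definition finite_subgroup {gT : groupType} (G : {pred gT}) : Prop :=
  [/\ 1 \in G, {in G &, forall x y, x * y \in G},
      {in G, forall x, x^-1 \in G} & exists s : seq gT, {subset G <= s}].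

(* Edge relations of the twisted Cayley graph C(G,S)^sigma and the twisted
   Cayley sum graph C_Sigma(G,S)^sigma (vertex set G, supplied separately):
   an edge from x to sigma(x s), resp. sigma(x^-1 s), for each s in S. *)
Definition twisted_cayley {gT : groupType} (S : {pred gT}) (sigma : gT -> gT)
  (x y : gT) : Prop := exists2 s, s \in S & y = sigma (x * s).

Definition twisted_cayley_sum {gT : groupType} (S : {pred gT})
  (sigma : gT -> gT) (x y : gT) : Prop := exists2 s, s \in S & y = sigma (x^-1 * s).

Definition digraph_iso {T : Type} (V : {pred T}) (E1 E2 : T -> T -> Prop) : Prop :=
  exists f : T -> T,
    [/\ {in V, forall x, f x \in V}, {in V &, injective f},
        {in V, forall y, exists2 x, x \in V & f x = y}
      & {in V &, forall x y, E1 x y <-> E2 (f x) (f y)}].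

(* Main.v *)
Require Import Defs.
From mathcomp Require Import all_boot all_fingroup.
Local Open Scope group_scope.

Section Aux.
Variable gT : groupType.
Implicit Types x y z g : gT.
Definition cj g x := g * x * g^-1.
Lemma cjM g x y : cj g (x * y) = cj g x * cj g y.
Proof. by rewrite /cj !mulgA -(mulgA _ g^-1 g) mulVg mulg1. Qed.
Lemma cjV g x : cj g x^-1 = (cj g x)^-1.
Proof. by rewrite /cj !invMg invgK !mulgA. Qed.
Lemma cj_inj g : injective (cj g).
Proof. by move=> x y; rewrite /cj => /mulIg /mulgI. Qed.
Lemma cj_inner g s z : cj g (inner s z) = inner (cj g s) (cj g z).
Proof. by rewrite /inner !cjM cjV. Qed.

Lemma iso_gen (V S : {pred gT}) sig g :
  (forall y, (exists2 s, s \in S & y = g * s * g^-1) <-> y \in S) ->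
  (forall y, (exists2 x, x \in V & y = g * x * g^-1) <-> y \in V) ->
  digraph_iso V (twisted_cayley S (inner sig)) (twisted_cayley S (inner (g * sig * g^-1))) /\
  digraph_iso V (twisted_cayley_sum S (inner sig))
                (twisted_cayley_sum S (inner (g * sig * g^-1))).
Proof.
move=> HS HV.
have fV : {in V, forall x, cj g x \in V} by move=> x xV; apply/HV; exists x.
have fI : {in V &, injective (cj g)} by move=> x y _ _; apply: cj_inj.
have fS : {in V, forall y, exists2 x, x \in V & cj g x = y}.
  by move=> y /HV [x xV ->]; exists x.
split; exists (cj g); split => // x y _ _; split.
- case=> s sS ->; exists (cj g s); first by apply/HS; exists s.
  by rewrite cj_inner cjM.
- case=> s' /HS [s sS ->] E; exists s => //; apply: (@cj_inj g).
  by rewrite E cj_inner cjM.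
- case=> s sS ->; exists (cj g s); first by apply/HS; exists s.
  by rewrite cj_inner cjM cjV.
- case=> s' /HS [s sS ->] E; exists s => //; apply: (@cj_inj g).
  by rewrite E cj_inner cjM cjV.
Qed.
End Aux.

Lemma memS' (gT : finGroupType) (g y : gT) (S : {set gT}) :
  y \in [set g ^+ i * s * (g ^+ i)^-1 | i : 'I_#[g], s : gT in S] <->
  exists k, exists2 s, s \in S & y = g ^+ k * s * (g ^+ k)^-1.
Proof.
split.
  by case/imset2P => i s _ sS ->; exists i, s.
case=> k [s sS ->]; apply/imset2P.
exists (Ordinal (ltn_pmod k (order_gt0 g))) s => //.
by rewrite /= expg_mod_order.
Qed.

Lemma closS' (gT : finGroupType) (g : gT) (S : {set gT}) y :
  let S' := [set g ^+ i * s * (g ^+ i)^-1 | i : 'I_#[g], s : gT in S] in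
  (exists2 s, s \in S' & y = g * s * g^-1) <-> y \in S'.
Proof.
move=> S'; split.
  case=> s /memS' [k [t tS ->]] ->; apply/memS'; exists k.+1, t => //.
  by rewrite expgS invMg !mulgA.
case/memS' => k [t tS ->].
exists (g ^+ (k + #[g]).-1 * t * (g ^+ (k + #[g]).-1)^-1).
  by apply/memS'; exists (k + #[g]).-1, t.
have -> : g ^+ k = g * g ^+ (k + #[g]).-1.
  rewrite -expgS prednK; last by rewrite addn_gt0 order_gt0 orbT.
  by rewrite expgD expg_order mulg1.
by rewrite invMg !mulgA.
Qed.

Theorem proposition4p3 :
  (forall (gT : groupType) (G S : {pred gT}) (sig tau g : gT),
      finite_subgroup G -> {subset S <= G} -> sig \in G -> tau \in G ->
      g * sig * g^-1 = tau ->
      (forall y, (exists2 s, s \in S & y = g * s * g^-1) <-> y \in S) ->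
      (forall y, (exists2 x, x \in G & y = g * x * g^-1) <-> y \in G) ->
      digraph_iso G (twisted_cayley S (inner sig)) (twisted_cayley S (inner tau)) /\
      digraph_iso G (twisted_cayley_sum S (inner sig))
                    (twisted_cayley_sum S (inner tau)))
  /\
  (forall (n : nat) (sig tau : 'S_n) (S : {set 'S_n}),
      tau \in sig ^: [set: 'S_n] ->
      exists g : 'S_n,
        let S' := [set g ^+ i * s * (g ^+ i)^-1 | i : 'I_#[g], s : 'S_n in S] in
        digraph_iso [set: 'S_n] (twisted_cayley S' (inner sig))
                                (twisted_cayley S' (inner tau)) /\
        digraph_iso [set: 'S_n] (twisted_cayley_sum S' (inner sig))
                                (twisted_cayley_sum S' (inner tau))).
Proof.
split.
  move=> gT G S sig tau g _ _ _ _ <- HS HG; exact: iso_gen.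
move=> n sig tau S /imsetP [h _ ->].
exists h^-1 => S'.
have -> : sig ^ h = h^-1 * sig * h^-1^-1 by rewrite invgK conjgE mulgA.
apply: iso_gen; first exact: closS'.
move=> y; split => [_|_]; first by rewrite inE.
by exists (h * y * h^-1); rewrite ?inE // !mulgA mulVg mul1g invgK mulgVK.
Qed.
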